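(* Let $N\ge 2$ and $m$ be integers, let $v=e^{\pi i/N}$, and for integers $n$ put $\{n\}=v^n-v^{-n}$, $A(j,k)=\{j-k\}\{j+k\}$, $S(k,l)=\prod_{k\le n\le l}\{n\}$ and $S'(k,l)=\prod_{k\le n\le l,\ n\notin\{0,N\}}\{n\}$. For a finite family $(a_i)_{i\in I}$ put ${\prod'_{i\in I}}a_i=\sum_{i\in I}\prod_{r\in I\setminus\{i\}}a_r$. For integers $0\le j\le N-1$, $0\le l\le N-1$ define $$D(j,l)=(v^j+v^{-j})\Big(\prod_{k=1}^lA(j,k)+2\{j\}^2{\prod_{1\le k\le l}}'A(j,k)\Big)+\frac{mj}{2}\{j\}\prod_{k=1}^lA(j,k).$$ Then $D(j,l)=D_1(j,l)+D_2(j,l)$, where $D_1(j,l)=\Big(\frac{mj}{2}+\frac{v^j+v^{-j}}{\{j\}}+2\{2j\}\sum_{k=1}^l\frac{1}{A(j,k)}\Big)S(j-l,j+l)$ if $l<\min(j,N-j)$, and $D_1(j,l)=0$ if $l\ge\min(j,N-j)$; and $D_2(j,l)=2S'(j-l,j+l)$ if $j\le l<N-j$, $D_2(j,l)=-2S'(j-l,j+l)$ if $N-j\le l<j$, and $D_2(j,l)=0$ if $l<\min(j,N-j)$ or $l\ge\max(j,N-j)$. *)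

(* Defs.v *)
From mathcomp Require Import all_boot all_order all_algebra all_field.
Set Implicit Arguments. Unset Strict Implicit. Unset Printing Implicit Defensive.
Import Order.TTheory GRing.Theory Num.Theory.
Local Open Scope ring_scope.

(* v = e^{pi i / N}: N.-root (-1) in algC is the N-th root of -1 with minimal
   nonnegative argument, i.e. exp(pi i / N). *)
Definition vv (N : nat) : algC := N.-root (-1).

Definition br (N : nat) (n : int) : algC := vv N ^ n - vv N ^ (- n).

Definition AA (N : nat) (j k : int) : algC := br N (j - k) * br N (j + k).

Definition SS (N : nat) (k l : int) : algC :=
  if k <= l then \prod_(i < (absz (l - k)).+1) br N (k + i%:Z) else 1.

Definition SS' (N : nat) (k l : int) : algC :=
  if k <= l then
    \prod_(i < (absz (l - k)).+1 | (k + i%:Z != 0) && (k + i%:Z != N%:Z))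
      br N (k + i%:Z)
  else 1.

Definition PA (N j l : nat) : algC := \prod_(1 <= k < l.+1) AA N j k.

Definition PA' (N j l : nat) : algC :=
  \sum_(1 <= i < l.+1) \prod_(1 <= r < l.+1 | r != i) AA N j r.

Definition DD (N : nat) (m : int) (j l : nat) : algC :=
  (vv N ^+ j + vv N ^ (- (j%:Z))) * (PA N j l + 2 * (br N j) ^+ 2 * PA' N j l)
  + ((m * j%:Z)%:~R / 2) * br N j * PA N j l.

Definition DD1 (N : nat) (m : int) (j l : nat) : algC :=
  if (l < minn j (N - j))%N then
    ((m * j%:Z)%:~R / 2 + (vv N ^+ j + vv N ^ (- (j%:Z))) / br N j
     + 2 * br N (2 * j%:Z) * \sum_(1 <= k < l.+1) (AA N j k)^-1)
    * SS N (j%:Z - l%:Z) (j%:Z + l%:Z)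
  else 0.

Definition DD2 (N : nat) (j l : nat) : algC :=
  if (j <= l < N - j)%N then 2 * SS' N (j%:Z - l%:Z) (j%:Z + l%:Z)
  else if (N - j <= l < j)%N then - (2 * SS' N (j%:Z - l%:Z) (j%:Z + l%:Z))
  else 0.

(* Main.v *)
Require Import Defs.
From mathcomp Require Import all_boot all_order all_algebra all_field.
From mathcomp Require Import lra ring zify.
Import Order.TTheory GRing.Theory Num.Theory.
Local Open Scope ring_scope.
Lemma key (R : realFieldType) (x t c s : R) : x^+2 + t^+2 = 1 -> c^+2+s^+2 = 1 ->
  0 <= t -> 0 <= s -> (c != 1) || (s != 0) -> x <= c -> (x != c) || (t != s) -> x < x * (c^+2 - s^+2) + 2 * t * c * s.
Proof.
move=> h1 h2 ht hs0 hc1 hxc hne.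
have hs : 0 < s.
  rewrite lt_neqAle hs0 andbT; apply/negP => /eqP s0.
  move: h2 hc1 hxc hne; rewrite -s0 expr0n /= addr0 => /eqP; rewrite sqrf_eq1 eqxx orbF.
  case/orP => /eqP ->; first by rewrite !eqxx.
  move=> _ hxc.
  have hx : x = -1 by nra.
  have ht0 : t = 0.
    move: h1; rewrite hx sqrrN expr1n => /eqP; rewrite -subr_eq0 addrC addKr sqrf_eq0 => /eqP //.
  by rewrite hx ht0 !eqxx.
suff hD : 0 < t * c - x * s.
  have h3 := mulr_gt0 hs hD.
  have -> : x * (c ^+ 2 - s ^+ 2) + 2 * t * c * s = x + 2 * (s * (t * c - x * s)).
    transitivity (x * (c^+2 - s^+2) + 2 * t * c * s + x * (1 - (c^+2+s^+2))); first by rewrite h2 subrr mulr0 addr0.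
    ring.
  lra.
set D := t * c - x * s; set E := x * c + t * s.
have hx : x = E * c - D * s.
  transitivity (x * (c^+2+s^+2)); first by rewrite h2 mulr1.
  rewrite /D /E; ring.
have ht' : t = E * s + D * c.
  transitivity (t * (c^+2+s^+2)); first by rewrite h2 mulr1.
  rewrite /D /E; ring.
have hDE : D^+2 + E^+2 = 1.
  transitivity ((x^+2+t^+2)*(c^+2+s^+2)); last by rewrite h1 h2 mulr1.
  rewrite /D /E; ring.
rewrite ltNge; apply/negP => hD0.
have hD1 : D != 0.
  apply/negP => /eqP hD00.
  move: hx ht' hDE; rewrite hD00 => hx ht' hDE.
  have : E = 1 \/ E = -1 by  move: hDE; rewrite expr0n /= add0r => /eqP; rewrite sqrf_eq1 => /orP[/eqP|/eqP]; auto.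
  case=> hE.
    by move: hne; rewrite hx ht' hE !mul1r !mul0r subr0 addr0 !eqxx.
  nra.
have hDn : D < 0 by rewrite lt_neqAle hD1 hD0.
have hE1 : E < 1 by nra.
have hc : 0 < c by nra.
have hE : 0 < E by nra.
nra.
Qed.

Lemma keyC (x t c s : algC) (hx : x \is Num.real) (ht : t \is Num.real)
  (hc : c \is Num.real) (hs : s \is Num.real) :
  x^+2 + t^+2 = 1 -> c^+2+s^+2 = 1 ->
  0 <= t -> 0 <= s -> (c != 1) || (s != 0) -> x <= c -> (x != c) || (t != s) -> x < x * (c^+2 - s^+2) + 2 * t * c * s.
Proof.
move=> h1 h2 h3 h4 h4' h5 h6.
pose X := in_algR hx; pose T := in_algR ht; pose C := in_algR hc; pose S := in_algR hs.
have := @key _ X T C S.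
have E : forall a b : algR, (val a = val b) -> a = b by move=> a b; apply: val_inj.
rewrite /X /T /C /S.
move=> H.
have := H (E _ _ _) (E _ _ _).
 rewrite /= ?rmorphD ?rmorphXn //= -!expr2 => /(_ h1 h2 h3 h4 _ h5 h6) R.
have := R h4'. clear R => R.
have : (algRval (in_algR hx) < algRval (in_algR hx * (in_algR hc ^+ 2 - in_algR hs ^+ 2) + 2 * in_algR ht * in_algR hc * in_algR hs)) := R.
by rewrite !(rmorphD, rmorphB, rmorphM, rmorphXn, rmorph_nat) /=.
Qed.

Lemma exists_maxRe (s : seq algC) (Q : pred algC) :
  has Q s -> exists2 y, Q y & forall x, x \in s -> Q x -> 'Re x <= 'Re y.
Proof.
elim: s => [//|a s IH] /=.
case: (boolP (has Q s)) => [hs _ | hs].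
  have [y Qy Hy] := IH hs.
  case: (boolP (Q a)) => Qa.
    have := real_leVge (Creal_Re a) (Creal_Re y); case/orP => h.
      exists y => // x; rewrite inE => /orP[/eqP->//|]; exact: Hy.
    exists a => // x; rewrite inE => /orP[/eqP->//|xs Qx].
    exact: le_trans (Hy _ xs Qx) h.
  exists y => // x; rewrite inE => /orP[/eqP->|]; first by rewrite (negbTE Qa).
  exact: Hy.
rewrite orbF => Qa; exists a => // x; rewrite inE => /orP[/eqP->//|xs Qx].
by move/hasPn: hs => /(_ x xs); rewrite Qx.
Qed.

Lemma norm1_conj (y : algC) (n : nat) : (0 < n)%N -> y ^+ n = -1 -> y * y^* = 1.
Proof.
move=> n0 hy.
have : `|y| ^+ n = 1 by rewrite -normrX hy normrN normr1.
move/eqP; rewrite pexpr_eq1 // => /eqP h.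
by rewrite -normCK h expr1n.
Qed.

Arguments norm1_conj {y n}.

Lemma vv_prim (N k : nat) : (2 <= N)%N -> (0 < k < N)%N -> vv N ^+ (2 * k) != 1.
Proof.
move=> N2 /andP[k0 kN].
have N0 : (0 < N)%N by apply: leq_trans N2.
set w := vv N.
have wN : w ^+ N = -1 by rewrite /w /vv rootCK.
have ww : w * w^* = 1 := norm1_conj N0 wN.
apply/negP => /eqP wk.
have N20 : (0 < 2 * N)%N by rewrite muln_gt0.
have [z zP] := C_prim_root_exists N20.
have zN : z ^+ N = -1.
  have h1 : (z ^+ N) ^+ 2 == 1 by rewrite -exprM mulnC (prim_expr_order zP).
  have h2 : z ^+ N != 1.
    rewrite -(prim_order_dvd zP); apply/negP => /(dvdn_leq N0).
    by rewrite leqNgt ltn_Pmull.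
  by move: h1; rewrite sqrf_eq1 (negbTE h2) /= => /eqP.
pose P (y : algC) := (y ^+ N == -1) && [forall i : 'I_k, y != w ^+ (2 * i + 1)].
have hPz : P z.
  rewrite /P zN eqxx /=; apply/forallP => i; apply/negP => /eqP hz.
  have : z ^+ (2 * k) == 1 by rewrite hz -exprM mulnC exprM wk expr1n.
  rewrite -(prim_order_dvd zP) dvdn_pmul2l // => /(dvdn_leq k0).
  by rewrite leqNgt kN.
have hPw : ~~ P w.
  rewrite /P negb_and; apply/orP; right; rewrite negb_forall; apply/existsP.
  by exists (Ordinal k0); rewrite /= muln0 add0n expr1 eqxx.
have hPconj : forall y, P y -> P y^*.
  move=> y /andP[/eqP hy /forallP hW]; rewrite /P -rmorphXn hy rmorphN rmorph1 eqxx /=.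
  apply/forallP => i; apply/negP => /eqP hc.
  have ltk : (k - i.+1 < k)%N by rewrite ltn_subrL k0.
  move: (hW (Ordinal ltk)); rewrite /= => /negP; apply.
  have hu : w ^+ (2 * i + 1) != 0 by rewrite expf_neq0 //; apply/negP => /eqP w0; move: wN; rewrite w0 expr0n /=; case: (N) N0 => // n _ /eqP; rewrite eq_sym oppr_eq0 oner_eq0.
  rewrite -(inj_eq (mulIf hu)) -exprD.
  have -> : (2 * (k - i.+1) + 1 + (2 * i + 1) = 2 * k)%N.
    have := ltn_ord i; lia.
  by rewrite wk -hc (norm1_conj N0 hy).
have hPdiv : forall y, P y -> P (y * w^* ^+ 2).
  move=> y /andP[/eqP hy /forallP hW]; rewrite /P exprMn hy -exprM mulnC exprM -rmorphXn wN rmorphN rmorph1 sqrrN expr1n mulr1 eqxx /=.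
  apply/forallP => i; apply/negP => /eqP hc.
  have hy' : y = w ^+ (2 * i.+1 + 1).
    have <- : y * (w^* ^+2) * w^+2 = y by rewrite -mulrA -exprMn (mulrC w^*) ww expr1n mulr1.
    rewrite hc -exprD; congr (_ ^+ _); lia.
  case: (ltnP i.+1 k) => hik.
    by move: (hW (Ordinal hik)); rewrite hy' eqxx.
  have ik : i.+1 = k by have := ltn_ord i; lia.
  by move: (hW (Ordinal k0)); rewrite /= hy' ik muln0 add0n exprD wk mul1r expr1 eqxx.
pose s := [seq z ^+ i | i <- iota 0 (2 * N)].
have hs : forall y, P y -> y \in s.
  move=> y /andP[/eqP hy _].
  have : y ^+ (2*N) = 1 by rewrite mulnC exprM hy sqrrN expr1n.
  move=> /(prim_rootP zP) [i ->]. apply/mapP; exists (val i) => //; by rewrite mem_iota /= add0n ltn_ord.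
have hasP0 : has P s by apply/hasP; exists z; [exact: hs|exact hPz].
have [y0 Py0 Hy0] := exists_maxRe _ _ hasP0.
pose y1 := if 0 <= 'Im y0 then y0 else y0^*.
have Py1 : P y1 by rewrite /y1; case: ifP => _ //; exact: hPconj.
have Re1 : 'Re y1 = 'Re y0 by rewrite /y1; case: ifP => // _; rewrite Re_conj.
have Im1 : 0 <= 'Im y1.
  rewrite /y1; case: ifP => // /negbT h; rewrite Im_conj oppr_ge0; apply: ltW.
  by rewrite real_ltNge ?real0 ?Creal_Im.
have hy1N : y1 ^+ N = -1 by apply/eqP; case/andP: Py1.
have hle : 'Re y1 <= 'Re w := rootC_Re_max N0 hy1N Im1.
have hne : y1 != w by apply/eqP => e; move: hPw; rewrite -e Py1.
have Py2 := hPdiv _ Py1.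
have := Hy0 _ (hs _ Py2) Py2; rewrite -Re1.
have y1n := norm1_conj N0 hy1N.
set x := 'Re y1; set t := 'Im y1; set c := 'Re w; set sI := 'Im w.
have rx : x \is Num.real by apply: Creal_Re.
have rt : t \is Num.real by apply: Creal_Im.
have rc : c \is Num.real by apply: Creal_Re.
have rs : sI \is Num.real by apply: Creal_Im.
have ey1 : y1 = x + 'i * t by apply: Crect.
have ew : w = c + 'i * sI by apply: Crect.
have ewc : w^* = c - 'i * sI by rewrite ew conjC_rect.
have hi := @sqrCi algC.
have -> : y1 * w^* ^+ 2 = (x*(c^+2-sI^+2)+2*t*c*sI) + 'i * (t*(c^+2-sI^+2) - 2*x*c*sI).
  rewrite {1}ey1 ewc.
  apply/eqP; rewrite -subr_eq0; apply/eqP.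
  transitivity (('i ^+ 2 + 1) * (x * sI^+2 - 2 * t * c * sI + 'i * t * sI^+2)); first by ring.
  by rewrite hi addNr mul0r.
rewrite Re_rect; last first.
  by rewrite ?(realD, realB, realN, realM, realX, realn, rx, rt, rc, rs).
  by rewrite ?(realD, realB, realN, realM, realX, realn, rx, rt, rc, rs).
apply/negP; rewrite -real_ltNge; last first.
  by rewrite ?(realD, realB, realN, realM, realX, realn, rx, rt, rc, rs).
  by [].
apply: keyC => //.
- have : y1 * y1^* = 1 := y1n.
  rewrite ey1 conjC_rect // => h; rewrite -h.
  apply/eqP; rewrite -subr_eq0; apply/eqP.
  transitivity ((('i ^+ 2 + 1) * t^+2)); first by ring.
  by rewrite hi addNr mul0r.
- have : w * w^* = 1 := ww.
  rewrite ewc {1}ew => h; rewrite -h.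
  apply/eqP; rewrite -subr_eq0; apply/eqP.
  transitivity ((('i ^+ 2 + 1) * sI^+2)); first by ring.
  by rewrite hi addNr mul0r.
- exact: Im_rootC_ge0.
- rewrite -negb_and; apply/negP => /andP[/eqP c1 /eqP s0].
  move: wN; rewrite ew c1 s0 mulr0 addr0 expr1n => /eqP; rewrite -subr_eq0 opprK -(natrD _ 1 1) pnatr_eq0 //.
- rewrite -negb_and; apply/negP => /andP[/eqP e1 /eqP e2].
  by move: hne; rewrite ey1 ew e1 e2 eqxx.
Qed.

Lemma vv_neq0 N : (0 < N)%N -> vv N != 0.
Proof. by move=> N0; rewrite /vv rootC_eq0 // oppr_eq0 oner_eq0. Qed.

Lemma vvN N : (0 < N)%N -> vv N ^+ N = -1.
Proof. by move=> N0; rewrite /vv rootCK. Qed.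

Lemma br0 N : br N 0 = 0.
Proof. by rewrite /br oppr0 subrr. Qed.

Lemma brNeg N (n : int) : br N (- n) = - br N n.
Proof. by rewrite /br opprK opprB. Qed.

Lemma br_nat N (n : nat) : br N n = vv N ^+ n - (vv N ^+ n)^-1.
Proof. by rewrite /br -exprnN exprnP. Qed.

Lemma brNN N : (0 < N)%N -> br N N = 0.
Proof.
move=> N0; rewrite br_nat vvN // invrN invr1 opprK addNr //.
Qed.

Lemma br_subN N (n : int) : (0 < N)%N -> br N (n - N%:Z) = - br N n.
Proof.
move=> N0; have w0 := vv_neq0 _ N0.
rewrite /br opprB !expfzDr // -exprnN -exprnP vvN // invrN invr1.
rewrite mulrN1 mulN1r; ring.
Qed.

Lemma br_double N (j : nat) : (0 < N)%N ->
  (vv N ^+ j + vv N ^ (- (j%:Z))) * br N j = br N (2 * j%:Z).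
Proof.
move=> N0; have w0 := vv_neq0 _ N0.
have -> : (2 * j%:Z) = (2 * j)%N%:Z by rewrite PoszM.
rewrite !br_nat -exprnN exprnP -exprnP mulnC exprM.
have a0 : vv N ^+ j != 0 by rewrite expf_neq0.
field. by rewrite expf_neq0.
Qed.

Lemma br_neq0 N (n : nat) : (2 <= N)%N -> (0 < n < N)%N -> br N n != 0.
Proof.
move=> N2 hn; have N0 : (0 < N)%N by apply: leq_trans N2.
have w0 := vv_neq0 _ N0.
have a0 : vv N ^+ n != 0 by rewrite expf_neq0.
rewrite br_nat subr_eq0; apply/negP => /eqP h.
have := vv_prim _ _ N2 hn; rewrite mulnC exprM expr2 {1}h mulVf //.
by rewrite eqxx.
Qed.

Lemma sym_prod (f : int -> algC) (c : int) (l : nat) :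
  \prod_(i < (absz ((c + l%:Z) - (c - l%:Z))%R).+1) f (c - l%:Z + i%:Z)
  = f c * \prod_(1 <= k < l.+1) (f (c - k%:Z) * f (c + k%:Z)).
Proof.
have -> : absz ((c + l%:Z) - (c - l%:Z))%R = (l + l)%N by lia.
elim: l => [|l IH].
  by rewrite big_ord1 big_geq // mulr1 /= subr0 addr0.
rewrite addSn addnS big_ord_recl big_ord_recr /=.
rewrite (eq_bigr (fun i : 'I_(l+l).+1 => f (c - l%:Z + i%:Z))); last first.
  by move=> i _; congr f; rewrite /= /bump /=; lia.
rewrite IH [in RHS]big_nat_recr //=.
have -> : c - l.+1%:Z + 0%:Z = c - l.+1%:Z by lia.
have -> : c - l.+1%:Z + (bump 0 (l + l).+1)%:Z = c + l.+1%:Z by rewrite /bump /=; lia.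
ring.
Qed.

Definition gg N (n : int) : algC := if (n != 0) && (n != N%:Z) then br N n else 1.

Lemma SS_eq N (j l : nat) : SS N (j%:Z - l%:Z) (j%:Z + l%:Z) = br N j * PA N j l.
Proof.
rewrite /SS ifT; last by lia.
by rewrite sym_prod.
Qed.

Lemma SS'_eq N (j l : nat) : SS' N (j%:Z - l%:Z) (j%:Z + l%:Z) =
  gg N j * \prod_(1 <= k < l.+1) (gg N (j%:Z - k%:Z) * gg N (j%:Z + k%:Z)).
Proof.
rewrite /SS' ifT; last by lia.
rewrite big_mkcond /=.
by rewrite -(sym_prod (gg N)).
Qed.

Lemma prodp_nz (F : nat -> algC) l : (forall k, (1 <= k < l.+1)%N -> F k != 0) ->
  \sum_(1 <= i < l.+1) \prod_(1 <= r < l.+1 | r != i) F r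
  = (\prod_(1 <= k < l.+1) F k) * \sum_(1 <= k < l.+1) (F k)^-1.
Proof.
move=> H; rewrite mulr_sumr; apply: eq_big_nat => i hi.
rewrite (bigD1_seq i) ?mem_index_iota ?iota_uniq //= mulrAC mulfV ?mul1r ?H //.
Qed.

Lemma prod_zero (F : nat -> algC) l k0 : (1 <= k0 < l.+1)%N -> F k0 = 0 ->
  \prod_(1 <= k < l.+1) F k = 0.
Proof.
move=> hk hF; rewrite (bigD1_seq k0) ?mem_index_iota ?iota_uniq //= hF mul0r //.
Qed.

Lemma prodp_zero (F : nat -> algC) l k0 : (1 <= k0 < l.+1)%N -> F k0 = 0 ->
  \sum_(1 <= i < l.+1) \prod_(1 <= r < l.+1 | r != i) F r
  = \prod_(1 <= r < l.+1 | r != k0) F r.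
Proof.
move=> hk hF; rewrite [LHS](bigD1_seq k0) ?mem_index_iota ?iota_uniq //=.
have -> : \sum_(i <- index_iota 1 l.+1 | i != k0) \prod_(1 <= r < l.+1 | r != i) F r = 0.
  apply: big1 => i hi.
  rewrite big_mkcond (bigD1_seq k0) ?mem_index_iota ?iota_uniq //= eq_sym hi hF mul0r //.
by rewrite addr0.
Qed.
Arguments prodp_nz {F l}.
Arguments prod_zero {F l k0}.
Arguments prodp_zero {F l k0}.

Theorem lemma2p3 (N : nat) (m : int) (j l : nat) :
  (2 <= N)%N -> (j <= N - 1)%N -> (l <= N - 1)%N ->
  DD N m j l = DD1 N m j l + DD2 N j l.
Proof.
move=> N2 hj hl.
have N0 : (0 < N)%N by apply: leq_trans N2.
have hX := br_double N j N0.
rewrite /DD /DD1 /DD2 SS_eq SS'_eq.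
set X := vv N ^+ j + vv N ^ (- (j%:Z)) in hX *.
set M := ((m * j%:Z)%:~R / 2 : algC).
have [hA|hA] := ltnP l (minn j (N - j)).
  have c2 : (j <= l < N - j)%N = false by lia.
  have c3 : (N - j <= l < j)%N = false by lia.
  rewrite c2 c3 addr0.
  have nzA : forall k, (1 <= k < l.+1)%N -> AA N j k != 0.
    move=> k hk; rewrite /AA mulf_neq0 //.
      have -> : j%:Z - k%:Z = (j - k)%N%:Z by lia.
      apply: br_neq0 => //; lia.
    have -> : j%:Z + k%:Z = (j + k)%N%:Z by lia.
    apply: br_neq0 => //; lia.
  have nzj : br N j != 0 by apply: br_neq0 => //; lia.
  rewrite /PA' (prodp_nz nzA) -/(PA N j l) -hX.
  field.
  exact: nzj.
have c1 : (l < minn j (N - j))%N = false by lia.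
rewrite /= add0r.
have hjN : (j < N)%N by lia.
have b0 : br N (Posz 0) = 0 by rewrite br_nat expr0 invr1 subrr.
have gb : forall n : int, n != 0 -> n != N%:Z -> gg N n = br N n.
  by move=> n h1 h2; rewrite /gg h1 h2.
have g0 : gg N 0 = 1 by rewrite /gg eqxx.
case: (boolP (j <= l < N - j)%N) => c2.
  case: (posnP j) => [j0|jpos].
    have X2 : X = 2 by rewrite /X j0 -exprnN !expr0 invr1.
    rewrite X2; move: c2; rewrite j0 => c2.
    rewrite b0 /gg eqxx /=.
    rewrite exprS mul0r !(mulr0, mul0r, addr0, mul1r).
    congr (_ * _); rewrite /PA; apply: eq_big_nat => k hk.
    rewrite /AA ifT; last by lia.
    rewrite ifT //; lia.
  have Ajj : AA N j j = 0 by rewrite /AA subrr br0 mul0r.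
  have hk : (1 <= j < l.+1)%N by lia.
  rewrite /PA' (prodp_zero hk Ajj) /PA (prod_zero hk Ajj).
  rewrite gb; [|lia|lia].
  rewrite [X in _ = 2 * (_ * X)](bigD1_seq j) ?mem_index_iota ?iota_uniq //=.
  rewrite subrr g0 mul1r gb; [|lia|lia].
  have -> : j%:Z + j%:Z = 2 * j%:Z by lia.
  rewrite -hX.
  rewrite [X in _ = 2 * (_ * (_ * X))]big_seq_cond.
  have E : \prod_(i <- index_iota 1 l.+1 | (i \in index_iota 1 l.+1) && (i != j)) (gg N (j%:Z - i%:Z) * gg N (j%:Z + i%:Z)) = \prod_(1 <= r < l.+1 | r != j) AA N j r.
    rewrite [RHS]big_seq_cond; apply: eq_bigr => r /andP[/[!mem_index_iota] hr hrj].
    rewrite /AA !gb //; lia.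
  rewrite E; ring.
case: (boolP (N - j <= l < j)%N) => c3.
  set k0 := (N - j)%N.
  have hk : (1 <= k0 < l.+1)%N by lia.
  have Ak : AA N j k0 = 0.
    rewrite /AA (_ : j%:Z + k0%:Z = N%:Z); last by lia.
    by rewrite brNN // mulr0.
  rewrite /PA' (prodp_zero hk Ak) /PA (prod_zero hk Ak).
  rewrite gb; [|lia|lia].
  rewrite [X in _ = - (2 * (_ * X))](bigD1_seq k0) ?mem_index_iota ?iota_uniq //=.
  rewrite (_ : j%:Z + k0%:Z = N%:Z); last by lia.
  have gN : gg N N = 1 by rewrite /gg eqxx andbF.
  rewrite gN mulr1 gb; [|lia|lia].
  rewrite (_ : j%:Z - k0%:Z = 2 * j%:Z - N%:Z); last by lia.
  rewrite br_subN // -hX.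
  rewrite [X in _ = - (2 * (_ * (_ * X)))]big_seq_cond.
  have E : \prod_(i <- index_iota 1 l.+1 | (i \in index_iota 1 l.+1) && (i != k0)) (gg N (j%:Z - i%:Z) * gg N (j%:Z + i%:Z)) = \prod_(1 <= r < l.+1 | r != k0) AA N j r.
    rewrite [RHS]big_seq_cond; apply: eq_bigr => r /andP[/[!mem_index_iota] hr hrj].
    rewrite /AA !gb //; lia.
  rewrite E; ring.
have jpos : (0 < j)%N by lia.
have hk : (1 <= j < l.+1)%N by lia.
have Ajj : AA N j j = 0 by rewrite /AA subrr br0 mul0r.
rewrite /PA' (prodp_zero hk Ajj) /PA (prod_zero hk Ajj).
case: (eqVneq (j + j)%N N) => hN.
  have X0 : X = 0.
    rewrite /X -exprnN.
    have a0 : vv N ^+ j != 0 by rewrite expf_neq0 // vv_neq0.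
    have ha : (vv N ^+ j) ^+ 2 = -1 by rewrite -exprM muln2 -addnn hN vvN.
    have -> : (vv N ^+ j)^-1 = - vv N ^+ j.
      by apply: (mulfI a0); rewrite mulfV // mulrN -expr2 ha opprK.
    by rewrite subrr.
  rewrite X0; ring.
have hk2 : (1 <= N - j < l.+1)%N by lia.
have Ak : AA N j (N - j)%N = 0.
  rewrite /AA (_ : j%:Z + (N - j)%N%:Z = N%:Z); last by lia.
  by rewrite brNN // mulr0.
rewrite big_mkcond (bigD1_seq (N - j)%N) ?mem_index_iota ?iota_uniq //=.
rewrite ifT; last by apply/eqP; lia.
rewrite Ak; ring.
Qed.
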